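(* Let $\alpha_1\le\dots\le\alpha_r$ and $\beta_1\le\dots\le\beta_{r+1}$ be positive real numbers such that $\alpha_i\ge\beta_{i+1}$ for $i=1,\dots,r$ and $\sum_{i=1}^r\alpha_i=\sum_{i=1}^{r+1}\beta_i$. Then $\sum_{i=1}^{r+1}\beta_i^2\le\sum_{i=1}^r\alpha_i^2$, with equality if and only if $\alpha_i=\beta_{i+1}$ for all $i=1,\dots,r$. *)

(* Defs.v *)
From mathcomp Require Import all_boot all_order all_algebra.
From mathcomp Require Export reals.
Set Implicit Arguments. Unset Strict Implicit. Unset Printing Implicit Defensive.

(* Main.v *)
Require Import Defs.
From mathcomp Require Import all_boot all_order all_algebra.
From mathcomp Require Import reals.
From mathcomp Require Import ring lra.
Import Order.TTheory GRing.Theory Num.Theory.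
Local Open Scope ring_scope.

Theorem lemma2p5 (R : realType) (r : nat) (alpha : 'I_r -> R) (beta : 'I_r.+1 -> R)
  (alpha_pos : forall i, 0 < alpha i) (beta_pos : forall j, 0 < beta j)
  (alpha_mono : forall i j : 'I_r, (i <= j)%N -> alpha i <= alpha j)
  (beta_mono : forall i j : 'I_r.+1, (i <= j)%N -> beta i <= beta j)
  (interlace : forall i : 'I_r, beta (lift ord0 i) <= alpha i)
  (sum_eq : \sum_(i < r) alpha i = \sum_(j < r.+1) beta j) :
  \sum_(j < r.+1) beta j ^+ 2 <= \sum_(i < r) alpha i ^+ 2 /\
  (\sum_(j < r.+1) beta j ^+ 2 = \sum_(i < r) alpha i ^+ 2 <->
     forall i : 'I_r, alpha i = beta (lift ord0 i)).
Proof.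
pose b0 := beta ord0.
pose d i := alpha i - beta (lift ord0 i).
pose t i := (2 * beta (lift ord0 i) - b0) * d i + d i ^+ 2.
have hd : b0 = \sum_(i < r) d i.
  by rewrite /d sumrB sum_eq big_ord_recl /b0; ring.
have key : \sum_(i < r) alpha i ^+ 2
         = \sum_(j < r.+1) beta j ^+ 2 + \sum_(i < r) t i.
  rewrite big_ord_recl -/b0 expr2 {2}hd mulr_sumr -!big_split /=.
  apply: eq_bigr => i _; rewrite /t /d; ring.
have hb0 : forall i : 'I_r, b0 <= beta (lift ord0 i).
  by move=> i; apply: beta_mono.
have ht : forall i, 0 <= t i.
  move=> i; have := hb0 i; have := interlace i; have := beta_pos (lift ord0 i).
  rewrite /t /d => ? ? ?; nra.
have hs : 0 <= \sum_(i < r) t i by apply: sumr_ge0 => i _.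
split; first by rewrite key lerDl.
split.
- move=> E i.
  have E0 : \sum_(i < r) t i = 0.
    by move: E; rewrite key => E; lra.
  have := (@psumr_eq0P _ _ xpredT t (fun i _ => ht i) E0 i isT).
  have := hb0 i; have := interlace i; have := beta_pos (lift ord0 i).
  rewrite /t /d => ? ? ? ?; nra.
- move=> H.
  have E0 : forall i, t i = 0 by move=> i; rewrite /t /d H; ring.
  by rewrite key [X in _ + X]big1 ?addr0 // => i _; exact: E0.
Qed.
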